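(* Let $\mathcal{E}$ be the 2D Laplace equation $u_{xx}+u_{yy}=0$, with cotangent equation $\{u_{xx}+u_{yy}=0,\ p_{xx}+p_{yy}=0\}$, and consider the variational bivectors $B_0=p$, $B_1=p_{yy}$, $B_2=p_{xy}$, $B_3=p_y+2(xp_{xy}+yp_{yy})$, $B_4=p_x+2(yp_{xy}-xp_{yy})$, $B_5=u_{yy}p_y-u_{xy}p_x+2(u_yp_{yy}-u_xp_{xy})$, $B_6=u_{yy}p_x+u_{xy}p_y+2(u_yp_{xy}+u_xp_{yy})$, $B_7=(u_y+xu_{xy}+yu_{yy})p_x+(u_x+yu_{xy}-xu_{yy})p_y+2(yu_x-xu_y)p_{yy}+2(xu_x+yu_y)p_{xy}$, $B_8=-(u_x+yu_{xy}-xu_{yy})p_x+(u_y+xu_{xy}+yu_{yy})p_y+2(xu_x+yu_y)p_{yy}-2(yu_x-xu_y)p_{xy}$. Then $B_0,\dots,B_4$ are Poisson structures on $\mathcal{E}$, while $B_5,\dots,B_8$ are not Poisson structures; moreover, the Schouten brackets $[\![B_i,B_j]\!]$ are nonzero for all $5\le i\le j\le 8$.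
   Context: Setting: a scalar PDE $\mathcal{E}=\{F=0\}$ for one unknown $u(x^1,\dots,x^n)$, regarded as a submanifold of the infinite jet space with coordinates $x^i$, $u_\sigma$ ($\sigma$ a multi-index). $D_i$ are total derivatives, $D_\sigma$ their compositions. A $\mathcal{C}$-differential operator is an operator of the form $\sum_\sigma a^\sigma D_\sigma$ with smooth coefficients on the jet space (or on $\mathcal{E}$). The linearization is $\ell_F=\sum_\sigma \frac{\partial F}{\partial u_\sigma}D_\sigma$ and $\ell_{\mathcal{E}}$ its restriction to $\mathcal{E}$; $\Delta^*$ denotes the formal adjoint ($(\sum a^\sigma D_\sigma)^*=\sum(-1)^{|\sigma|}D_\sigma\circ a^\sigma$). The cotangent equation $\mathcal{T}^*\mathcal{E}$ is the system $\{F=0,\ \ell_F(p)=0\}$ (with all differential consequences), where $p$ is a new unknown of odd parity, so that all $p_\sigma$ are odd (anticommuting; in particular $p_\sigma p_\sigma=0$). Variational bivector: a $\mathcal{C}$-differential operator $H=\sum_\sigma h^\sigma D_\sigma$ on $\mathcal{E}$ such that (i) $\ell_{\mathcal{E}}(H_u)=0$ on $\mathcal{T}^*\mathcal{E}$, where $H_u=H(p)=\sum_\sigma h^\sigma p_\sigma$; and (ii) $H^*\circ\ell_{\mathcal{E}}^*=\ell_{\mathcal{E}}\circ H$ as operators on $\mathcal{E}$. Bivectors are identified with their functions $H_u$ (so ''$B=\sum B_\sigma p_\sigma$'' means $B=\sum B_\sigma D_\sigma$). Schouten bracket: for a bivector $H$, choose a bi-differential operator $\nabla$ in total derivatives on the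 jet space of $(u,p)$ with $\ell_F(H(p))-H^*(\ell_F(p))=\nabla(F,p)$ identically, and set $H_p=-\tfrac12\nabla^{*_1}(p,p)\big|_{\mathcal{T}^*\mathcal{E}}$ (even element quadratic in the $p_\sigma$; $\nabla^{*_1}$ is the adjoint in the first argument). Let $\mathrm{Ev}_{\phi(H)}=\sum_\sigma D_\sigma(H_u)\partial/\partial u_\sigma+D_\sigma(H_p)\partial/\partial p_\sigma$ (odd evolutionary derivation on $\mathcal{T}^*\mathcal{E}$). The Schouten bracket of bivectors $H,H'$ is $[\![H,H']\!]=\mathrm{Ev}_{\phi(H)}(H'_u)+\mathrm{Ev}_{\phi(H')}(H_u)$, a function on $\mathcal{T}^*\mathcal{E}$. $H$ is a Poisson structure if $[\![H,H]\!]=0$; two Poisson structures $H,H'$ are compatible if $[\![H,H']\!]=0$. *)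

(* Defs.v *)
From Stdlib Require Import Reals List Arith.
Import ListNotations.
Open Scope R_scope.

(* multi-index (i, j) = i derivatives in x, j derivatives in y *)
Definition mi := (nat * nat)%type.

Inductive evar := VX | VY | VU (s : mi).

Definition evar_eqb (a b : evar) : bool :=
  match a, b with
  | VX, VX => true
  | VY, VY => true
  | VU (i, j), VU (k, l) => Nat.eqb i k && Nat.eqb j l
  | _, _ => false
  end.

Inductive expr :=
| ECst (c : R)
| EVar (v : evar)
| EAdd (a b : expr)
| EMul (a b : expr).

Fixpoint eval (val : evar -> R) (e : expr) : R :=
  match e with
  | ECst c => c
  | EVar v => val v
  | EAdd a b => eval val a + eval val b
  | EMul a b => eval val a * eval val b
  end.

Fixpoint dpart (w : evar) (e : expr) : expr :=
  match e with
  | ECst _ => ECst 0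
  | EVar v => if evar_eqb v w then ECst 1 else ECst 0
  | EAdd a b => EAdd (dpart w a) (dpart w b)
  | EMul a b => EAdd (EMul (dpart w a) b) (EMul a (dpart w b))
  end.

Inductive dir := DX | DY.

Definition shift (d : dir) (s : mi) : mi :=
  match d with DX => (S (fst s), snd s) | DY => (fst s, S (snd s)) end.

Fixpoint tder (d : dir) (e : expr) : expr :=
  match e with
  | ECst _ => ECst 0
  | EVar VX => ECst (match d with DX => 1 | DY => 0 end)
  | EVar VY => ECst (match d with DX => 0 | DY => 1 end)
  | EVar (VU s) => EVar (VU (shift d s))
  | EAdd a b => EAdd (tder d a) (tder d b)
  | EMul a b => EAdd (EMul (tder d a) b) (EMul a (tder d b))
  end.

Definition tderm (s : mi) (e : expr) : expr :=
  Nat.iter (fst s) (tder DX) (Nat.iter (snd s) (tder DY) e).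

(* odd elements linear in p:  sum_k e_k p_{s_k} *)
Definition lin := list (expr * mi).
(* even elements quadratic in p:  sum_k e_k p_{s_k} p_{t_k}  (ordered product) *)
Definition quad := list (expr * mi * mi).

Definition lin_der (d : dir) (l : lin) : lin :=
  flat_map (fun '(e, s) => [(tder d e, s); (e, shift d s)]) l.
Definition quad_der (d : dir) (q : quad) : quad :=
  flat_map (fun '(e, s, t) =>
    [(tder d e, s, t); (e, shift d s, t); (e, s, shift d t)]) q.
Definition lin_derm (s : mi) (l : lin) : lin :=
  Nat.iter (fst s) (lin_der DX) (Nat.iter (snd s) (lin_der DY) l).
Definition quad_derm (s : mi) (q : quad) : quad :=
  Nat.iter (fst s) (quad_der DX) (Nat.iter (snd s) (quad_der DY) q).

Definition lin_scale (c : expr) (l : lin) : lin :=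
  map (fun '(e, s) => (EMul c e, s)) l.
Definition quad_scale (c : expr) (q : quad) : quad :=
  map (fun '(e, s, t) => (EMul c e, s, t)) q.
Definition lin_sub (l1 l2 : lin) : lin := l1 ++ lin_scale (ECst (-1)) l2.
(* product of two odd linear elements (left factor first) *)
Definition lin_mul (l1 l2 : lin) : quad :=
  flat_map (fun '(e1, s1) => map (fun '(e2, s2) => (EMul e1 e2, s1, s2)) l2) l1.

(* Semantics.  Even coordinates are evaluated by a valuation; the odd       *)
(* variables p_sigma generate a Grassmann algebra, whose degree-1 part is   *)
(* faithfully represented by linear forms and whose degree-2 part by        *)
(* alternating bilinear forms (p_s p_t |-> a_s b_t - a_t b_s).              *)
Definition lin_eval (val : evar -> R) (a : mi -> R) (l : lin) : R :=
  fold_right (fun '(e, s) acc => eval val e * a s + acc) 0 l.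
Definition quad_eval (val : evar -> R) (a b : mi -> R) (q : quad) : R :=
  fold_right (fun '(e, s, t) acc => eval val e * (a s * b t - a t * b s) + acc) 0 q.

Definition lin_eq (l1 l2 : lin) : Prop :=
  forall val a, lin_eval val a l1 = lin_eval val a l2.

(* Restriction to the equation.  On E = {u_xx + u_yy = 0} (resp. on        *)
(* T*E, where also p_xx + p_yy = 0) the internal coordinates are x, y,      *)
(* u_(i,j), p_(i,j) with i <= 1, and u_(i,j) = (-1)^(i/2) u_(i mod 2, j + 2(i/2)). *)
Definition red_mi (s : mi) : mi := (fst s mod 2, snd s + 2 * (fst s / 2))%nat.
Definition red_sign (s : mi) : R := if Nat.even (fst s / 2) then 1 else -1.

Fixpoint red_expr (e : expr) : expr :=
  match e with
  | ECst c => ECst c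
  | EVar (VU s) => EMul (ECst (red_sign s)) (EVar (VU (red_mi s)))
  | EVar v => EVar v
  | EAdd a b => EAdd (red_expr a) (red_expr b)
  | EMul a b => EMul (red_expr a) (red_expr b)
  end.

(* restriction to E (only u is constrained; p is free) *)
Definition red_lin_E (l : lin) : lin := map (fun '(e, s) => (red_expr e, s)) l.
Definition red_lin_TE (l : lin) : lin :=
  map (fun '(e, s) => (EMul (ECst (red_sign s)) (red_expr e), red_mi s)) l.
Definition red_quad_TE (q : quad) : quad :=
  map (fun '(e, s, t) =>
    (EMul (ECst (red_sign s * red_sign t)) (red_expr e), red_mi s, red_mi t)) q.

(* vanishing on T*E (a reduced element is a function of the free internal  *)
(* coordinates of T*E) *)
Definition lin_zero_TE (l : lin) : Prop :=
  forall val a, lin_eval val a (red_lin_TE l) = 0.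
Definition quad_zero_TE (q : quad) : Prop :=
  forall val a b, quad_eval val a b (red_quad_TE q) = 0.

Definition mis (n : nat) : list mi := list_prod (seq 0 n) (seq 0 n).

Fixpoint ebound (e : expr) : nat :=
  match e with
  | ECst _ => 0
  | EVar (VU (i, j)) => S (Nat.max i j)
  | EVar _ => 0
  | EAdd a b | EMul a b => Nat.max (ebound a) (ebound b)
  end.

(* C-differential operators  sum_k h_k D_{s_k} *)
Definition op := list (expr * mi).

Definition sgn (s : mi) : R := if Nat.even (fst s + snd s) then 1 else -1.

Definition op_app (H : op) (w : lin) : lin :=
  flat_map (fun '(h, s) => lin_scale h (lin_derm s w)) H.
Definition op_adj_app (H : op) (w : lin) : lin :=
  flat_map (fun '(h, s) => lin_scale (ECst (sgn s)) (lin_derm s (lin_scale h w))) H.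

Definition pvar : lin := [(ECst 1, (0, 0)%nat)].
Definition Hu (H : op) : lin := op_app H pvar.

Definition lapF : expr := EAdd (EVar (VU (2, 0)%nat)) (EVar (VU (0, 2)%nat)).

Definition ellF (F : expr) : op :=
  map (fun s => (dpart (VU s) F, s)) (mis (ebound F)).

(* variational bivector: (i) l_E(H_u) = 0 on T*E;                          *)
(* (ii) H^* o l_E^* = l_E o H as operators on E (tested on a free odd p).   *)
Definition variational_bivector (H : op) : Prop :=
  lin_zero_TE (op_app (ellF lapF) (Hu H)) /\
  lin_eq (red_lin_E (op_adj_app H (op_adj_app (ellF lapF) pvar)))
         (red_lin_E (op_app (ellF lapF) (op_app H pvar))).

(* bi-differential operators nabla(a, b) = sum_k c_k D_{s_k}(a) D_{t_k}(b), *)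
(* coefficients c_k functions of (x, y, u_sigma)                           *)
Definition bidiff := list (expr * mi * mi).

Definition nabla_Fp (N : bidiff) (F : expr) : lin :=
  map (fun '(c, s, t) => (EMul c (tderm s F), t)) N.

Definition nabla_ok (H : op) (N : bidiff) : Prop :=
  lin_eq (lin_sub (op_app (ellF lapF) (Hu H))
                  (op_adj_app H (op_app (ellF lapF) pvar)))
         (nabla_Fp N lapF).

(* H_p = -1/2 nabla^{*1}(p, p) restricted to T*E, where                    *)
(* nabla^{*1}(a, b) = sum_k (-1)^|s_k| D_{s_k}(c_k a D_{t_k} b)             *)
Definition Hp (N : bidiff) : quad :=
  quad_scale (ECst (- (1 / 2)))
    (red_quad_TE
       (flat_map (fun '(c, s, t) =>
          quad_scale (ECst (sgn s)) (quad_derm s [(c, (0, 0)%nat, t)])) N)).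

(* Ev_{phi(H)}(G) on T*E, for G odd linear:                                *)
(* Ev(e p_s) = (sum_t D_t(H_u) de/du_t) p_s + e D_s(H_p)                   *)
Definition ev_apply (H : op) (N : bidiff) (G : lin) : quad :=
  flat_map (fun '(e, s) =>
      flat_map (fun t =>
         lin_mul (lin_scale (dpart (VU t) e) (red_lin_TE (lin_derm t (Hu H))))
                 [(ECst 1, s)]) (mis (ebound e))
      ++ quad_scale e (red_quad_TE (quad_derm s (Hp N))))
    (red_lin_TE G).

Definition schouten (H H' : op) (N N' : bidiff) : quad :=
  ev_apply H N (Hu H') ++ ev_apply H' N' (Hu H).

Definition bracket_zero (H H' : op) : Prop :=
  (exists N, nabla_ok H N) /\ (exists N', nabla_ok H' N') /\
  forall N N', nabla_ok H N -> nabla_ok H' N' -> quad_zero_TE (schouten H H' N N').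

Definition bracket_nonzero (H H' : op) : Prop :=
  (exists N, nabla_ok H N) /\ (exists N', nabla_ok H' N') /\
  forall N N', nabla_ok H N -> nabla_ok H' N' -> ~ quad_zero_TE (schouten H H' N N').

Definition poisson (H : op) : Prop := variational_bivector H /\ bracket_zero H H.

Definition ex : expr := EVar VX.
Definition ey : expr := EVar VY.
Definition eu (i j : nat) : expr := EVar (VU (i, j)).
Definition ec (c : R) : expr := ECst c.
Notation "a +e b" := (EAdd a b) (at level 50, left associativity).
Notation "a *e b" := (EMul a b) (at level 40, left associativity).

Definition ux := eu 1 0.
Definition uy := eu 0 1.
Definition uxy := eu 1 1.
Definition uyy := eu 0 2.

Definition B (n : nat) : op :=
  match n with
  | 0 => [(ec 1, (0, 0))]
  | 1 => [(ec 1, (0, 2))]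
  | 2 => [(ec 1, (1, 1))]
  | 3 => [(ec 1, (0, 1)); (ec 2 *e ex, (1, 1)); (ec 2 *e ey, (0, 2))]
  | 4 => [(ec 1, (1, 0)); (ec 2 *e ey, (1, 1)); (ec (-2) *e ex, (0, 2))]
  | 5 => [(uyy, (0, 1)); (ec (-1) *e uxy, (1, 0));
          (ec 2 *e uy, (0, 2)); (ec (-2) *e ux, (1, 1))]
  | 6 => [(uyy, (1, 0)); (uxy, (0, 1));
          (ec 2 *e uy, (1, 1)); (ec 2 *e ux, (0, 2))]
  | 7 => [(uy +e ex *e uxy +e ey *e uyy, (1, 0));
          (ux +e ey *e uxy +e ec (-1) *e ex *e uyy, (0, 1));
          (ec 2 *e (ey *e ux +e ec (-1) *e ex *e uy), (0, 2));
          (ec 2 *e (ex *e ux +e ey *e uy), (1, 1))]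
  | 8 => [(ec (-1) *e (ux +e ey *e uxy +e ec (-1) *e ex *e uyy), (1, 0));
          (uy +e ex *e uxy +e ey *e uyy, (0, 1));
          (ec 2 *e (ex *e ux +e ey *e uy), (0, 2));
          (ec (-2) *e (ey *e ux +e ec (-1) *e ex *e uy), (1, 1))]
  | _ => []
  end%nat.

(* Main.v *)
Require Import Defs.
From Stdlib Require Import Reals List Arith QArith Qreals Lra Lia Permutation FunctionalExtensionality.
Import ListNotations.
Open Scope R_scope.

Inductive qexpr := QC (c : Q) | QV (v : evar) | QA (a b : qexpr) | QM (a b : qexpr).

Fixpoint qdpart (w : evar) (e : qexpr) : qexpr :=
  match e with
  | QC _ => QC 0%Q
  | QV v => if evar_eqb v w then QC 1%Q else QC 0%Q
  | QA a b => QA (qdpart w a) (qdpart w b)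
  | QM a b => QA (QM (qdpart w a) b) (QM a (qdpart w b))
  end.

Fixpoint qtder (d : dir) (e : qexpr) : qexpr :=
  match e with
  | QC _ => QC 0%Q
  | QV VX => QC (match d with DX => 1%Q | DY => 0%Q end)
  | QV VY => QC (match d with DX => 0%Q | DY => 1%Q end)
  | QV (VU s) => QV (VU (shift d s))
  | QA a b => QA (qtder d a) (qtder d b)
  | QM a b => QA (QM (qtder d a) b) (QM a (qtder d b))
  end.

Definition qtderm (s : mi) (e : qexpr) : qexpr :=
  Nat.iter (fst s) (qtder DX) (Nat.iter (snd s) (qtder DY) e).

Definition qlin := list (qexpr * mi).
Definition qquad := list (qexpr * mi * mi).

Definition qlin_der (d : dir) (l : qlin) : qlin :=
  flat_map (fun '(e, s) => [(qtder d e, s); (e, shift d s)]) l.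
Definition qquad_der (d : dir) (q : qquad) : qquad :=
  flat_map (fun '(e, s, t) =>
    [(qtder d e, s, t); (e, shift d s, t); (e, s, shift d t)]) q.
Definition qlin_derm (s : mi) (l : qlin) : qlin :=
  Nat.iter (fst s) (qlin_der DX) (Nat.iter (snd s) (qlin_der DY) l).
Definition qquad_derm (s : mi) (q : qquad) : qquad :=
  Nat.iter (fst s) (qquad_der DX) (Nat.iter (snd s) (qquad_der DY) q).
Definition qlin_scale (c : qexpr) (l : qlin) : qlin :=
  map (fun '(e, s) => (QM c e, s)) l.
Definition qquad_scale (c : qexpr) (q : qquad) : qquad :=
  map (fun '(e, s, t) => (QM c e, s, t)) q.
Definition qlin_sub (l1 l2 : qlin) : qlin := l1 ++ qlin_scale (QC (-1)%Q) l2.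
Definition qlin_mul (l1 l2 : qlin) : qquad :=
  flat_map (fun '(e1, s1) => map (fun '(e2, s2) => (QM e1 e2, s1, s2)) l2) l1.

Definition qred_sign (s : mi) : Q := if Nat.even (fst s / 2) then 1%Q else (-1)%Q.
Fixpoint qred_expr (e : qexpr) : qexpr :=
  match e with
  | QC c => QC c
  | QV (VU s) => QM (QC (qred_sign s)) (QV (VU (red_mi s)))
  | QV v => QV v
  | QA a b => QA (qred_expr a) (qred_expr b)
  | QM a b => QM (qred_expr a) (qred_expr b)
  end.
Definition qred_lin_E (l : qlin) : qlin := map (fun '(e, s) => (qred_expr e, s)) l.
Definition qred_lin_TE (l : qlin) : qlin :=
  map (fun '(e, s) => (QM (QC (qred_sign s)) (qred_expr e), red_mi s)) l.
Definition qred_quad_TE (q : qquad) : qquad :=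
  map (fun '(e, s, t) =>
    (QM (QC (qred_sign s * qred_sign t)%Q) (qred_expr e), red_mi s, red_mi t)) q.

Fixpoint qebound (e : qexpr) : nat :=
  match e with
  | QC _ => 0
  | QV (VU (i, j)) => S (Nat.max i j)
  | QV _ => 0
  | QA a b | QM a b => Nat.max (qebound a) (qebound b)
  end.

Definition qop := list (qexpr * mi).
Definition qsgn (s : mi) : Q := if Nat.even (fst s + snd s) then 1%Q else (-1)%Q.
Definition qop_app (H : qop) (w : qlin) : qlin :=
  flat_map (fun '(h, s) => qlin_scale h (qlin_derm s w)) H.
Definition qop_adj_app (H : qop) (w : qlin) : qlin :=
  flat_map (fun '(h, s) => qlin_scale (QC (qsgn s)) (qlin_derm s (qlin_scale h w))) H.
Definition qpvar : qlin := [(QC 1%Q, (0, 0)%nat)].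
Definition qHu (H : qop) : qlin := qop_app H qpvar.
Definition qlapF : qexpr := QA (QV (VU (2, 0)%nat)) (QV (VU (0, 2)%nat)).
Definition qellF (F : qexpr) : qop :=
  map (fun s => (qdpart (VU s) F, s)) (mis (qebound F)).
Definition qbidiff := list (qexpr * mi * mi).
Definition qnabla_Fp (N : qbidiff) (F : qexpr) : qlin :=
  map (fun '(c, s, t) => (QM c (qtderm s F), t)) N.
Definition qHp (N : qbidiff) : qquad :=
  qquad_scale (QC (- (1 # 2))%Q)
    (qred_quad_TE
       (flat_map (fun '(c, s, t) =>
          qquad_scale (QC (qsgn s)) (qquad_derm s [(c, (0, 0)%nat, t)])) N)).
Definition qev_apply (H : qop) (N : qbidiff) (G : qlin) : qquad :=
  flat_map (fun '(e, s) =>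
      flat_map (fun t =>
         qlin_mul (qlin_scale (qdpart (VU t) e) (qred_lin_TE (qlin_derm t (qHu H))))
                 [(QC 1%Q, s)]) (mis (qebound e))
      ++ qquad_scale e (qred_quad_TE (qquad_derm s (qHp N))))
    (qred_lin_TE G).
Definition qschouten (H H' : qop) (N N' : qbidiff) : qquad :=
  qev_apply H N (qHu H') ++ qev_apply H' N' (qHu H).

Fixpoint repE (q : qexpr) (e : expr) : Prop :=
  match q, e with
  | QC c, ECst c' => Q2R c = c'
  | QV v, EVar v' => v = v'
  | QA a b, EAdd a' b' => repE a a' /\ repE b b'
  | QM a b, EMul a' b' => repE a a' /\ repE b b'
  | _, _ => False
  end.
Definition repL (lq : qlin) (l : lin) : Prop :=
  Forall2 (fun x y => repE (fst x) (fst y) /\ snd x = snd y) lq l.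
Definition repQ (lq : qquad) (l : quad) : Prop :=
  Forall2 (fun x y => repE (fst (fst x)) (fst (fst y)) /\ snd (fst x) = snd (fst y)
     /\ snd x = snd y) lq l.

Lemma Q2R0 : Q2R 0 = 0. Proof. unfold Q2R; simpl; lra. Qed.
Lemma Q2R1 : Q2R 1 = 1. Proof. unfold Q2R; simpl; lra. Qed.
Lemma Q2Rm1 : Q2R (-1) = -1. Proof. unfold Q2R; simpl; lra. Qed.

Lemma rep_dpart w q e : repE q e -> repE (qdpart w q) (dpart w e).
Proof.
  revert e; induction q; destruct e; simpl; try tauto; intros.
  - apply Q2R0.
  - subst; destruct (evar_eqb v0 w); simpl; [apply Q2R1|apply Q2R0].
  - destruct H; split; auto.
  - destruct H; repeat split; auto.
Qed.

Lemma rep_tder d q e : repE q e -> repE (qtder d q) (tder d e).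
Proof.
  revert e; induction q; destruct e; simpl; try tauto; intros.
  - apply Q2R0.
  - subst; destruct v0 as [| |s]; simpl; auto; destruct d; simpl;
      first [apply Q2R0 | apply Q2R1].
  - destruct H; split; auto.
  - destruct H; repeat split; auto.
Qed.

Lemma rep_iter {A B} (P : A -> B -> Prop) (f : A -> A) (g : B -> B) n x y :
  (forall x y, P x y -> P (f x) (g y)) -> P x y -> P (Nat.iter n f x) (Nat.iter n g y).
Proof. intros Hf Hxy; induction n; simpl; auto. Qed.

Lemma rep_tderm s q e : repE q e -> repE (qtderm s q) (tderm s e).
Proof.
  intros; unfold qtderm, tderm. apply rep_iter; [intros; apply rep_tder; auto|].
  apply rep_iter; [intros; apply rep_tder; auto|auto].
Qed.

Lemma Q2R_red_sign s : Q2R (qred_sign s) = red_sign s.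
Proof. unfold qred_sign, red_sign; destruct (Nat.even _); [apply Q2R1|apply Q2Rm1]. Qed.
Lemma Q2R_sgn s : Q2R (qsgn s) = sgn s.
Proof. unfold qsgn, sgn; destruct (Nat.even _); [apply Q2R1|apply Q2Rm1]. Qed.

Lemma rep_red q e : repE q e -> repE (qred_expr q) (red_expr e).
Proof.
  revert e; induction q; destruct e; simpl; try tauto; intros.
  - subst; destruct v0; simpl; auto. split; auto. apply Q2R_red_sign.
  - destruct H; split; auto.
  - destruct H; repeat split; auto.
Qed.

Lemma rep_ebound q e : repE q e -> qebound q = ebound e.
Proof.
  revert e; induction q; destruct e; simpl; try tauto; intros.
  - subst; reflexivity.
  - destruct H; f_equal; auto.
  - destruct H; f_equal; auto.
Qed.

Lemma F2_app {A B} (P : A -> B -> Prop) l1 l2 m1 m2 :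
  Forall2 P l1 m1 -> Forall2 P l2 m2 -> Forall2 P (l1 ++ l2) (m1 ++ m2).
Proof. intros H; induction H; simpl; auto. Qed.

Lemma F2_flat_map {A B C D} (P : A -> B -> Prop) (Q : C -> D -> Prop) f g l m :
  Forall2 P l m -> (forall x y, P x y -> Forall2 Q (f x) (g y)) ->
  Forall2 Q (flat_map f l) (flat_map g m).
Proof. intros H Hfg; induction H; simpl; auto. apply F2_app; auto. Qed.

Lemma F2_map {A B C D} (P : A -> B -> Prop) (Q : C -> D -> Prop) f g l m :
  Forall2 P l m -> (forall x y, P x y -> Q (f x) (g y)) ->
  Forall2 Q (map f l) (map g m).
Proof. intros H Hfg; induction H; simpl; auto. Qed.

Lemma rep_lin_der d lq l : repL lq l -> repL (qlin_der d lq) (lin_der d l).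
Proof.
  intro H; apply (F2_flat_map _ _ _ _ _ _ H).
  intros [e1 s1] [e2 s2] [He Hs]; simpl in *; subst.
  repeat constructor; simpl; auto using rep_tder.
Qed.
Lemma rep_quad_der d lq l : repQ lq l -> repQ (qquad_der d lq) (quad_der d l).
Proof.
  intro H; apply (F2_flat_map _ _ _ _ _ _ H).
  intros [[e1 s1] t1] [[e2 s2] t2] [He [Hs Ht]]; simpl in *; subst.
  repeat constructor; simpl; auto using rep_tder.
Qed.
Lemma rep_lin_derm s lq l : repL lq l -> repL (qlin_derm s lq) (lin_derm s l).
Proof.
  intros; unfold qlin_derm, lin_derm. apply rep_iter; [intros; apply rep_lin_der; auto|].
  apply rep_iter; [intros; apply rep_lin_der; auto|auto].
Qed.
Lemma rep_quad_derm s lq l : repQ lq l -> repQ (qquad_derm s lq) (quad_derm s l).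
Proof.
  intros; unfold qquad_derm, quad_derm. apply rep_iter; [intros; apply rep_quad_der; auto|].
  apply rep_iter; [intros; apply rep_quad_der; auto|auto].
Qed.
Lemma rep_lin_scale c c' lq l : repE c c' -> repL lq l -> repL (qlin_scale c lq) (lin_scale c' l).
Proof.
  intros Hc H; apply (F2_map _ _ _ _ _ _ H).
  intros [e1 s1] [e2 s2] [He Hs]; simpl in *; subst; auto.
Qed.
Lemma rep_quad_scale c c' lq l : repE c c' -> repQ lq l -> repQ (qquad_scale c lq) (quad_scale c' l).
Proof.
  intros Hc H; apply (F2_map _ _ _ _ _ _ H).
  intros [[e1 s1] t1] [[e2 s2] t2] [He [Hs Ht]]; simpl in *; subst; auto.
Qed.
Lemma rep_lin_sub l1 l2 m1 m2 : repL l1 m1 -> repL l2 m2 -> repL (qlin_sub l1 l2) (lin_sub m1 m2).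
Proof. intros; apply F2_app; auto. apply rep_lin_scale; auto. apply Q2Rm1. Qed.
Lemma rep_lin_mul l1 l2 m1 m2 : repL l1 m1 -> repL l2 m2 -> repQ (qlin_mul l1 l2) (lin_mul m1 m2).
Proof.
  intros H1 H2; apply (F2_flat_map _ _ _ _ _ _ H1).
  intros [e1 s1] [f1 u1] [He Hs]; simpl in *; subst.
  apply (F2_map _ _ _ _ _ _ H2).
  intros [e2 s2] [f2 u2] [He' Hs']; simpl in *; subst; auto.
Qed.
Lemma rep_red_lin_E lq l : repL lq l -> repL (qred_lin_E lq) (red_lin_E l).
Proof.
  intros H; apply (F2_map _ _ _ _ _ _ H).
  intros [e1 s1] [e2 s2] [He Hs]; simpl in *; subst; auto using rep_red.
Qed.
Lemma rep_red_lin_TE lq l : repL lq l -> repL (qred_lin_TE lq) (red_lin_TE l).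
Proof.
  intros H; apply (F2_map _ _ _ _ _ _ H).
  intros [e1 s1] [e2 s2] [He Hs]; simpl in *; subst; repeat split; auto using rep_red.
  apply Q2R_red_sign.
Qed.
Lemma rep_red_quad_TE lq l : repQ lq l -> repQ (qred_quad_TE lq) (red_quad_TE l).
Proof.
  intros H; apply (F2_map _ _ _ _ _ _ H).
  intros [[e1 s1] t1] [[e2 s2] t2] [He [Hs Ht]]; simpl in *; subst; repeat split; auto using rep_red.
  rewrite Q2R_mult, !Q2R_red_sign; auto.
Qed.
Definition repO (h : qop) (H : op) : Prop := repL h H.
Lemma rep_op_app h H lq l : repL h H -> repL lq l -> repL (qop_app h lq) (op_app H l).
Proof.
  intros H1 H2; apply (F2_flat_map _ _ _ _ _ _ H1).
  intros [e1 s1] [e2 s2] [He Hs]; simpl in *; subst.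
  apply rep_lin_scale; auto. apply rep_lin_derm; auto.
Qed.
Lemma rep_op_adj_app h H lq l : repL h H -> repL lq l -> repL (qop_adj_app h lq) (op_adj_app H l).
Proof.
  intros H1 H2; apply (F2_flat_map _ _ _ _ _ _ H1).
  intros [e1 s1] [e2 s2] [He Hs]; simpl in *; subst.
  apply rep_lin_scale; [apply Q2R_sgn|]. apply rep_lin_derm; auto. apply rep_lin_scale; auto.
Qed.
Lemma rep_pvar : repL qpvar pvar.
Proof. repeat constructor; simpl. apply Q2R1. Qed.
Lemma rep_Hu h H : repL h H -> repL (qHu h) (Hu H).
Proof. intros; apply rep_op_app; auto using rep_pvar. Qed.
Lemma rep_lapF : repE qlapF lapF.
Proof. simpl; auto. Qed.
Lemma rep_ellF q e : repE q e -> repL (qellF q) (ellF e).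
Proof.
  intros H; unfold qellF, ellF; rewrite (rep_ebound _ _ H).
  induction (mis (ebound e)); simpl; constructor; auto. simpl; split; auto using rep_dpart.
Qed.
Definition repN (nq : qbidiff) (n : bidiff) : Prop := repQ nq n.
Lemma rep_nabla_Fp nq n q e : repQ nq n -> repE q e -> repL (qnabla_Fp nq q) (nabla_Fp n e).
Proof.
  intros H1 H2; apply (F2_map _ _ _ _ _ _ H1).
  intros [[e1 s1] t1] [[e2 s2] t2] [He [Hs Ht]]; simpl in *; subst; repeat split; auto using rep_tderm.
Qed.
Lemma rep_Hp nq n : repQ nq n -> repQ (qHp nq) (Hp n).
Proof.
  intros H; unfold qHp, Hp. apply rep_quad_scale.
  - simpl; unfold Q2R; simpl; lra.
  - apply rep_red_quad_TE. apply (F2_flat_map _ _ _ _ _ _ H).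
    intros [[e1 s1] t1] [[e2 s2] t2] [He [Hs Ht]]; simpl in *; subst.
    apply rep_quad_scale; [apply Q2R_sgn|]. apply rep_quad_derm. repeat constructor; auto.
Qed.
Lemma rep_ev_apply h H nq n gq g : repL h H -> repQ nq n -> repL gq g ->
  repQ (qev_apply h nq gq) (ev_apply H n g).
Proof.
  intros H1 H2 H3; unfold qev_apply, ev_apply.
  apply (F2_flat_map _ _ _ _ _ _ (rep_red_lin_TE _ _ H3)).
  intros [e1 s1] [e2 s2] [He Hs]; simpl in *; subst.
  apply F2_app.
  - rewrite (rep_ebound _ _ He). induction (mis (ebound e2)); simpl; [constructor|].
    apply F2_app; auto. apply rep_lin_mul.
    + apply rep_lin_scale; auto using rep_dpart. apply rep_red_lin_TE, rep_lin_derm, rep_Hu; auto.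
    + repeat constructor; simpl; auto. apply Q2R1.
  - apply rep_quad_scale; auto. apply rep_red_quad_TE, rep_quad_derm, rep_Hp; auto.
Qed.
Lemma rep_schouten h h' H H' nq nq' n n' : repL h H -> repL h' H' -> repQ nq n -> repQ nq' n' ->
  repQ (qschouten h h' nq nq') (schouten H H' n n').
Proof.
  intros; unfold qschouten, schouten; apply F2_app; apply rep_ev_apply; auto using rep_Hu.
Qed.

Fixpoint toE (q : qexpr) : expr :=
  match q with QC c => ECst (Q2R c) | QV v => EVar v | QA a b => EAdd (toE a) (toE b)
  | QM a b => EMul (toE a) (toE b) end.
Lemma rep_toE q : repE q (toE q).
Proof. induction q; simpl; auto. Qed.
Definition toN (n : qbidiff) : bidiff := map (fun '(c, s, t) => (toE c, s, t)) n.
Lemma rep_toN n : repQ n (toN n).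
Proof. induction n as [|[[c s] t] n IH]; simpl; constructor; auto. simpl; auto using rep_toE. Qed.

Fixpoint evalQR (val : evar -> R) (q : qexpr) : R :=
  match q with
  | QC c => Q2R c
  | QV v => val v
  | QA a b => evalQR val a + evalQR val b
  | QM a b => evalQR val a * evalQR val b
  end.
Lemma rep_eval val q e : repE q e -> eval val e = evalQR val q.
Proof.
  revert e; induction q; destruct e; simpl; try tauto; intros.
  - auto.
  - subst; auto.
  - destruct H; f_equal; auto.
  - destruct H; f_equal; auto.
Qed.
Definition qlin_evalR (val : evar -> R) (a : mi -> R) (l : qlin) : R :=
  fold_right (fun '(e, s) acc => evalQR val e * a s + acc) 0 l.
Definition qquad_evalR (val : evar -> R) (a b : mi -> R) (q : qquad) : R :=
  fold_right (fun '(e, s, t) acc => evalQR val e * (a s * b t - a t * b s) + acc) 0 q.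
Lemma rep_lin_eval val a lq l : repL lq l -> lin_eval val a l = qlin_evalR val a lq.
Proof.
  induction 1 as [|[e1 s1] [e2 s2] lq l [He Hs] _ IH]; simpl in *; subst; auto.
  rewrite IH, (rep_eval _ _ _ He); auto.
Qed.
Lemma rep_quad_eval val a b lq l : repQ lq l -> quad_eval val a b l = qquad_evalR val a b lq.
Proof.
  induction 1 as [|[[e1 s1] t1] [[e2 s2] t2] lq l [He [Hs Ht]] _ IH]; simpl in *; subst; auto.
  rewrite IH, (rep_eval _ _ _ He); auto.
Qed.

Fixpoint evalQ (val : evar -> Q) (q : qexpr) : Q :=
  match q with
  | QC c => c
  | QV v => val v
  | QA a b => Qplus' (evalQ val a) (evalQ val b)
  | QM a b => Qmult' (evalQ val a) (evalQ val b)
  end.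
Lemma Q2R_Qplus' x y : Q2R (Qplus' x y) = Q2R x + Q2R y.
Proof. unfold Qplus'. rewrite (Qeq_eqR _ _ (Qred_correct _)). apply Q2R_plus. Qed.
Lemma Q2R_Qmult' x y : Q2R (Qmult' x y) = Q2R x * Q2R y.
Proof. unfold Qmult'. rewrite (Qeq_eqR _ _ (Qred_correct _)). apply Q2R_mult. Qed.
Lemma Q2R_Qminus' x y : Q2R (Qminus' x y) = Q2R x - Q2R y.
Proof. unfold Qminus'. rewrite (Qeq_eqR _ _ (Qred_correct _)). apply Q2R_minus. Qed.
Lemma evalQ_ok vQ q : evalQR (fun v => Q2R (vQ v)) q = Q2R (evalQ vQ q).
Proof.
  induction q; simpl; auto; rewrite ?Q2R_Qplus', ?Q2R_Qmult'; congruence.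
Qed.
Definition qquad_evalQ (val : evar -> Q) (a b : mi -> Q) (q : qquad) : Q :=
  fold_right (fun '(e, s, t) acc =>
     Qplus' (Qmult' (evalQ val e) (Qminus' (Qmult' (a s) (b t)) (Qmult' (a t) (b s)))) acc) 0%Q q.
Lemma qquad_evalQ_ok vQ aQ bQ q :
  qquad_evalR (fun v => Q2R (vQ v)) (fun s => Q2R (aQ s)) (fun s => Q2R (bQ s)) q =
  Q2R (qquad_evalQ vQ aQ bQ q).
Proof.
  induction q as [|[[e s] t] q IH]; simpl.
  - symmetry; apply Q2R0.
  - rewrite Q2R_Qplus', Q2R_Qmult', Q2R_Qminus', !Q2R_Qmult', evalQ_ok, IH; auto.
Qed.

Inductive atom := AV (v : evar) | AA (s : mi) | AB (s : mi).
Definition aval (val : evar -> R) (a b : mi -> R) (x : atom) : R :=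
  match x with AV v => val v | AA s => a s | AB s => b s end.
Definition poly := list (Q * list atom).
Section Env.
Variable env : atom -> R.
Definition prodA (m : list atom) : R := fold_right (fun x acc => env x * acc) 1 m.
Definition pe (p : poly) : R := fold_right (fun '(c, m) acc => Q2R c * prodA m + acc) 0 p.
End Env.

Definition pconst (c : Q) : poly := if Qeq_bool c 0 then [] else [(c, [])].
Definition pmul1 (c1 : Q) (m1 : list atom) (q : poly) : poly :=
  flat_map (fun '(c2, m2) =>
     let c := Qmult' c1 c2 in if Qeq_bool c 0 then [] else [(c, m1 ++ m2)]) q.
Definition pmul (p q : poly) : poly := flat_map (fun '(c1, m1) => pmul1 c1 m1 q) p.
Fixpoint poly_of (e : qexpr) : poly :=
  match e with
  | QC c => pconst c
  | QV v => [(1%Q, [AV v])]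
  | QA a b => poly_of a ++ poly_of b
  | QM a b => pmul (poly_of a) (poly_of b)
  end.

Lemma pe_app env p q : pe env (p ++ q) = pe env p + pe env q.
Proof. induction p as [|[c m] p IH]; simpl; [ring|rewrite IH; ring]. Qed.
Lemma prodA_app env m1 m2 : prodA env (m1 ++ m2) = prodA env m1 * prodA env m2.
Proof. induction m1; simpl; [ring|rewrite IHm1; ring]. Qed.
Lemma Qeq_bool_R c : Qeq_bool c 0 = true -> Q2R c = 0.
Proof. intro H; apply Qeq_bool_eq in H; rewrite (Qeq_eqR _ _ H); apply Q2R0. Qed.
Lemma pe_pmul1 env c1 m1 q : pe env (pmul1 c1 m1 q) = Q2R c1 * prodA env m1 * pe env q.
Proof.
  induction q as [|[c2 m2] q IHq]; simpl; [ring|].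
  rewrite pe_app, IHq. destruct (Qeq_bool (Qmult' c1 c2) 0) eqn:E; simpl.
  - apply Qeq_bool_R in E. rewrite Q2R_Qmult' in E.
    assert (Q2R c1 * prodA env m1 * (Q2R c2 * prodA env m2) = (Q2R c1 * Q2R c2) * prodA env m1 * prodA env m2) by ring.
    rewrite E in H. lra.
  - rewrite prodA_app, Q2R_Qmult'; ring.
Qed.
Lemma pe_pmul env p q : pe env (pmul p q) = pe env p * pe env q.
Proof.
  induction p as [|[c1 m1] p IH]; simpl; [ring|].
  rewrite pe_app, IH, pe_pmul1; ring.
Qed.
Lemma pe_poly_of val a b e : pe (aval val a b) (poly_of e) = evalQR val e.
Proof.
  induction e; simpl.
  - unfold pconst; destruct (Qeq_bool c 0) eqn:E; simpl.
    + symmetry; apply Qeq_bool_R; auto.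
    + unfold pe, prodA; simpl; ring.
  - unfold pe, prodA; simpl. rewrite Q2R1; ring.
  - rewrite pe_app; congruence.
  - rewrite pe_pmul; congruence.
Qed.

Definition linpoly (l : qlin) : poly :=
  flat_map (fun '(e, s) => pmul (poly_of e) [(1%Q, [AA s])]) l.
Definition quadpoly (l : qquad) : poly :=
  flat_map (fun '(e, s, t) => pmul (poly_of e) [(1%Q, [AA s; AB t]); ((-1)%Q, [AA t; AB s])]) l.
Definition pneg (p : poly) : poly := map (fun '(c, m) => (Qopp c, m)) p.
Lemma pe_pneg env p : pe env (pneg p) = - pe env p.
Proof. induction p as [|[c m] p IH]; simpl; [ring|]. rewrite IH, Q2R_opp; ring. Qed.
Lemma pe_linpoly val a b l : pe (aval val a b) (linpoly l) = qlin_evalR val a l.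
Proof.
  induction l as [|[e s] l IH]; simpl; [auto|].
  rewrite pe_app, pe_pmul, IH, pe_poly_of; simpl. rewrite Q2R1; ring.
Qed.
Lemma pe_quadpoly val a b l : pe (aval val a b) (quadpoly l) = qquad_evalR val a b l.
Proof.
  induction l as [|[[e s] t] l IH]; simpl; [auto|].
  rewrite pe_app, pe_pmul, IH, pe_poly_of; simpl. rewrite Q2R1, Q2Rm1; ring.
Qed.

Fixpoint lexleb (l1 l2 : list nat) : bool :=
  match l1, l2 with
  | [], _ => true
  | _ :: _, [] => false
  | x :: r, y :: s => if Nat.ltb x y then true else if Nat.eqb x y then lexleb r s else false
  end.
Definition acode (x : atom) : list nat :=
  match x with
  | AV VX => [0%nat] | AV VY => [1%nat] | AV (VU (i, j)) => [2; i; j]%nat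
  | AA (i, j) => [3; i; j]%nat | AB (i, j) => [4; i; j]%nat
  end.
Fixpoint insertA (x : atom) (l : list atom) : list atom :=
  match l with
  | [] => [x]
  | y :: r => if lexleb (acode x) (acode y) then x :: y :: r else y :: insertA x r
  end.
Fixpoint isort (l : list atom) : list atom :=
  match l with [] => [] | x :: r => insertA x (isort r) end.
Lemma insertA_perm x l : Permutation (insertA x l) (x :: l).
Proof.
  induction l; simpl; auto. destruct (lexleb _ _); auto.
  eapply perm_trans; [apply perm_skip; apply IHl|]. apply perm_swap.
Qed.
Lemma isort_perm l : Permutation (isort l) l.
Proof.
  induction l; simpl; auto. eapply perm_trans; [apply insertA_perm|]. auto.
Qed.
Lemma prodA_perm env l1 l2 : Permutation l1 l2 -> prodA env l1 = prodA env l2.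
Proof. induction 1; simpl; auto; try congruence; ring. Qed.

Definition evar_eqb_ok a b : evar_eqb a b = true -> a = b.
Proof.
  destruct a as [| |[i j]], b as [| |[k l]]; simpl; try discriminate; auto.
  intro H; apply andb_true_iff in H; destruct H as [H1 H2].
  apply Nat.eqb_eq in H1; apply Nat.eqb_eq in H2; subst; auto.
Qed.
Definition mi_eqb (s t : mi) : bool := Nat.eqb (fst s) (fst t) && Nat.eqb (snd s) (snd t).
Lemma mi_eqb_ok s t : mi_eqb s t = true -> s = t.
Proof.
  destruct s, t; unfold mi_eqb; simpl; intro H; apply andb_true_iff in H; destruct H as [H1 H2].
  apply Nat.eqb_eq in H1; apply Nat.eqb_eq in H2; subst; auto.
Qed.
Definition atom_eqb (x y : atom) : bool :=
  match x, y with
  | AV v, AV w => evar_eqb v w | AA s, AA t => mi_eqb s t | AB s, AB t => mi_eqb s t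
  | _, _ => false end.
Lemma atom_eqb_ok x y : atom_eqb x y = true -> x = y.
Proof.
  destruct x, y; simpl; try discriminate; intro H.
  - f_equal; apply evar_eqb_ok; auto.
  - f_equal; apply mi_eqb_ok; auto.
  - f_equal; apply mi_eqb_ok; auto.
Qed.
Fixpoint meq (m1 m2 : list atom) : bool :=
  match m1, m2 with
  | [], [] => true
  | x :: r, y :: s => atom_eqb x y && meq r s
  | _, _ => false end.
Lemma meq_ok m1 m2 : meq m1 m2 = true -> m1 = m2.
Proof.
  revert m2; induction m1; destruct m2; simpl; try discriminate; auto.
  intro H; apply andb_true_iff in H; destruct H. f_equal; auto using atom_eqb_ok.
Qed.

Definition sumc (p : poly) : Q := fold_right (fun t acc => Qplus (fst t) acc) 0%Q p.
Fixpoint zc (fuel : nat) (p : poly) : bool :=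
  match fuel with
  | O => match p with [] => true | _ => false end
  | S f => match p with
           | [] => true
           | (c, m) :: r =>
               Qeq_bool (Qplus c (sumc (filter (fun t => meq m (snd t)) r))) 0 &&
               zc f (filter (fun t => negb (meq m (snd t))) r)
           end
  end.
Definition isZero (p : poly) : bool :=
  zc (length p) (map (fun '(c, m) => (c, isort m)) p).

Lemma pe_filter env f p : pe env p = pe env (filter f p) + pe env (filter (fun t => negb (f t)) p).
Proof.
  induction p as [|[c m] p IH]; simpl; [ring|].
  destruct (f (c, m)); simpl; rewrite IH; ring.
Qed.
Lemma pe_same env m p : pe env (filter (fun t => meq m (snd t)) p) = Q2R (sumc (filter (fun t => meq m (snd t)) p)) * prodA env m.
Proof.
  induction p as [|[c m'] p IH]; simpl; [rewrite Q2R0; ring|].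
  destruct (meq m m') eqn:E; simpl; auto.
  apply meq_ok in E; subst. rewrite IH, Q2R_plus; ring.
Qed.
Lemma zc_ok env f p : zc f p = true -> pe env p = 0.
Proof.
  revert p; induction f; intros p H; destruct p as [|[c m] r]; simpl in *; auto; try discriminate.
  apply andb_true_iff in H; destruct H as [H1 H2].
  rewrite (pe_filter env (fun t => meq m (snd t)) r), pe_same, (IHf _ H2).
  apply Qeq_bool_R in H1. rewrite Q2R_plus in H1.
  replace (Q2R c * prodA env m + (Q2R (sumc (filter (fun t => meq m (snd t)) r)) * prodA env m + 0))
    with ((Q2R c + Q2R (sumc (filter (fun t => meq m (snd t)) r))) * prodA env m) by ring.
  rewrite H1; ring.
Qed.
Lemma isZero_ok env p : isZero p = true -> pe env p = 0.
Proof.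
  unfold isZero; intro H; apply zc_ok with (env := env) in H.
  rewrite <- H. clear H. induction p as [|[c m] p IH]; simpl; auto.
  rewrite IH, (prodA_perm env _ _ (isort_perm m)); auto.
Qed.

Lemma lin_zero_check lq l : repL lq l -> isZero (linpoly lq) = true ->
  forall val a, lin_eval val a l = 0.
Proof.
  intros Hr Hz val a. rewrite (rep_lin_eval _ _ _ _ Hr), <- (pe_linpoly val a a).
  apply isZero_ok; auto.
Qed.
Lemma lin_eq_check lq1 lq2 l1 l2 : repL lq1 l1 -> repL lq2 l2 ->
  isZero (linpoly lq1 ++ pneg (linpoly lq2)) = true -> lin_eq l1 l2.
Proof.
  intros H1 H2 Hz val a. rewrite (rep_lin_eval _ _ _ _ H1), (rep_lin_eval _ _ _ _ H2),
    <- (pe_linpoly val a a), <- (pe_linpoly val a a lq2).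
  apply (isZero_ok (aval val a a)) in Hz. rewrite pe_app, pe_pneg in Hz. lra.
Qed.

Definition qx : qexpr := QV VX.
Definition qy : qexpr := QV VY.
Definition qc (c : Q) : qexpr := QC c.
Definition qu (i j : nat) : qexpr := QV (VU (i, j)).
Definition qux := qu 1 0.
Definition quy := qu 0 1.
Definition quxy := qu 1 1.
Definition quyy := qu 0 2.
Definition qB (n : nat) : qop :=
  match n with
  | 0 => [(qc 1, (0, 0))]
  | 1 => [(qc 1, (0, 2))]
  | 2 => [(qc 1, (1, 1))]
  | 3 => [(qc 1, (0, 1)); (QM (qc 2) qx, (1, 1)); (QM (qc 2) qy, (0, 2))]
  | 4 => [(qc 1, (1, 0)); (QM (qc 2) qy, (1, 1)); (QM (qc (-2)) qx, (0, 2))]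
  | 5 => [(quyy, (0, 1)); (QM (qc (-1)) quxy, (1, 0));
          (QM (qc 2) quy, (0, 2)); (QM (qc (-2)) qux, (1, 1))]
  | 6 => [(quyy, (1, 0)); (quxy, (0, 1));
          (QM (qc 2) quy, (1, 1)); (QM (qc 2) qux, (0, 2))]
  | 7 => [(QA (QA quy (QM qx quxy)) (QM qy quyy), (1, 0));
          (QA (QA qux (QM qy quxy)) (QM (QM (qc (-1)) qx) quyy), (0, 1));
          (QM (qc 2) (QA (QM qy qux) (QM (QM (qc (-1)) qx) quy)), (0, 2));
          (QM (qc 2) (QA (QM qx qux) (QM qy quy)), (1, 1))]
  | 8 => [(QM (qc (-1)) (QA (QA qux (QM qy quxy)) (QM (QM (qc (-1)) qx) quyy)), (1, 0));
          (QA (QA quy (QM qx quxy)) (QM qy quyy), (0, 1));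
          (QM (qc 2) (QA (QM qx qux) (QM qy quy)), (0, 2));
          (QM (qc (-2)) (QA (QM qy qux) (QM (QM (qc (-1)) qx) quy)), (1, 1))]
  | _ => []
  end%nat.

Lemma rep_B i : repL (qB i) (B i).
Proof.
  do 9 (destruct i as [|i]; [simpl; repeat constructor; simpl; repeat split;
        unfold Q2R; simpl; lra|]).
  constructor.
Qed.

Definition pertV (val w : evar -> R) (x : R) : evar -> R := fun v => val v + x * w v.
Definition pertA (a w : mi -> R) (x : R) : mi -> R := fun s => a s + x * w s.

Lemma dpl_plus f g x l1 l2 : derivable_pt_lim f x l1 -> derivable_pt_lim g x l2 ->
  derivable_pt_lim (fun y => f y + g y) x (l1 + l2).
Proof. apply derivable_pt_lim_plus. Qed.
Lemma dpl_minus f g x l1 l2 : derivable_pt_lim f x l1 -> derivable_pt_lim g x l2 ->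
  derivable_pt_lim (fun y => f y - g y) x (l1 - l2).
Proof. apply derivable_pt_lim_minus. Qed.
Lemma dpl_mult f g x l1 l2 : derivable_pt_lim f x l1 -> derivable_pt_lim g x l2 ->
  derivable_pt_lim (fun y => f y * g y) x (l1 * g x + f x * l2).
Proof. apply derivable_pt_lim_mult. Qed.
Lemma dpl_const c x : derivable_pt_lim (fun _ => c) x 0.
Proof. apply derivable_pt_lim_const. Qed.
Lemma dpl_eq f x l l' : derivable_pt_lim f x l -> l = l' -> derivable_pt_lim f x l'.
Proof. intros H ->; auto. Qed.
Lemma dpl_lin c k x : derivable_pt_lim (fun y => c + y * k) x k.
Proof.
  eapply dpl_eq. apply dpl_plus. apply dpl_const. apply dpl_mult. apply derivable_pt_lim_id.
  apply dpl_const. unfold id; ring.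
Qed.

Fixpoint deval (val w : evar -> R) (x : R) (e : expr) : R :=
  match e with
  | ECst _ => 0
  | EVar v => w v
  | EAdd a b => deval val w x a + deval val w x b
  | EMul a b => deval val w x a * eval (pertV val w x) b + eval (pertV val w x) a * deval val w x b
  end.
Lemma eval_deriv val w x e : derivable_pt_lim (fun y => eval (pertV val w y) e) x (deval val w x e).
Proof.
  induction e; simpl.
  - apply dpl_const.
  - unfold pertV; apply dpl_lin.
  - apply dpl_plus; auto.
  - apply dpl_mult; auto.
Qed.
Lemma eval_pert0 val w e : eval (pertV val w 0) e = eval val e.
Proof. induction e; simpl; try congruence. unfold pertV; ring. Qed.

Definition shiftV (d : dir) (val : evar -> R) : evar -> R :=
  fun v => match v with
  | VX => match d with DX => 1 | DY => 0 end
  | VY => match d with DX => 0 | DY => 1 end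
  | VU s => val (VU (shift d s)) end.
Definition shiftA (d : dir) (a : mi -> R) : mi -> R := fun s => a (shift d s).

Lemma deval_tder val d e : deval val (shiftV d val) 0 e = eval val (tder d e).
Proof.
  induction e; simpl; auto.
  - destruct v; simpl; auto.
  - congruence.
  - rewrite !eval_pert0, IHe1, IHe2; auto.
Qed.

Lemma dpl_pertA a w s x : derivable_pt_lim (fun y => pertA a w y s) x (w s).
Proof. unfold pertA; apply dpl_lin. Qed.

Lemma quad_deriv val a b d q :
  derivable_pt_lim (fun x => quad_eval (pertV val (shiftV d val) x) (pertA a (shiftA d a) x)
                                        (pertA b (shiftA d b) x) q) 0
                   (quad_eval val a b (quad_der d q)).
Proof.
  induction q as [|[[e s] t] q IH]; simpl.
  - apply dpl_const.
  - eapply dpl_eq.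
    + apply dpl_plus; [apply dpl_mult; [apply eval_deriv|] | apply IH].
      apply dpl_minus; apply dpl_mult; apply dpl_pertA.
    + cbv beta. rewrite deval_tder, eval_pert0. unfold pertA, shiftA. ring.
Qed.

Definition SolV (val : evar -> R) : Prop :=
  forall i j, val (VU (S (S i), j)) + val (VU (i, S (S j))) = 0.
Definition SolA (a : mi -> R) : Prop :=
  forall i j, a (S (S i), j) + a (i, S (S j)) = 0.

Lemma sol_shiftV d val : SolV val -> SolV (shiftV d val).
Proof. intros H i j; destruct d; simpl; [apply (H (S i) j)|apply (H i (S j))]. Qed.
Lemma sol_shiftA d a : SolA a -> SolA (shiftA d a).
Proof. intros H i j; unfold shiftA; destruct d; simpl; [apply (H (S i) j)|apply (H i (S j))]. Qed.
Lemma sol_pertV val w x : SolV val -> SolV w -> SolV (pertV val w x).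
Proof. intros H1 H2 i j; unfold pertV. pose proof (H1 i j); pose proof (H2 i j). nra. Qed.
Lemma sol_pertA a w x : SolA a -> SolA w -> SolA (pertA a w x).
Proof. intros H1 H2 i j; unfold pertA. pose proof (H1 i j); pose proof (H2 i j). nra. Qed.

Definition EqSol (q1 q2 : quad) : Prop :=
  forall val a b, SolV val -> SolA a -> SolA b -> quad_eval val a b q1 = quad_eval val a b q2.
Definition AllEq (q1 q2 : quad) : Prop :=
  forall val a b, quad_eval val a b q1 = quad_eval val a b q2.

Lemma EqSol_der d q1 q2 : EqSol q1 q2 -> EqSol (quad_der d q1) (quad_der d q2).
Proof.
  intros H val a b Hv Ha Hb.
  apply (uniqueness_limite (fun x => quad_eval (pertV val (shiftV d val) x) (pertA a (shiftA d a) x)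
                                        (pertA b (shiftA d b) x) q1) 0).
  - apply quad_deriv.
  - replace (fun x => quad_eval (pertV val (shiftV d val) x) (pertA a (shiftA d a) x)
                                        (pertA b (shiftA d b) x) q1)
      with (fun x => quad_eval (pertV val (shiftV d val) x) (pertA a (shiftA d a) x)
                                        (pertA b (shiftA d b) x) q2).
    + apply quad_deriv.
    + apply functional_extensionality; intro x. symmetry; apply H.
      * apply sol_pertV; auto using sol_shiftV.
      * apply sol_pertA; auto using sol_shiftA.
      * apply sol_pertA; auto using sol_shiftA.
Qed.
Lemma EqSol_derm s q1 q2 : EqSol q1 q2 -> EqSol (quad_derm s q1) (quad_derm s q2).
Proof.
  intro H; unfold quad_derm. apply (rep_iter EqSol); [intros; apply EqSol_der; auto|].
  apply (rep_iter EqSol); [intros; apply EqSol_der; auto|auto].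
Qed.

Lemma quad_der_app d q1 q2 : quad_der d (q1 ++ q2) = quad_der d q1 ++ quad_der d q2.
Proof. unfold quad_der; apply flat_map_app. Qed.
Lemma quad_derm_app s q1 q2 : quad_derm s (q1 ++ q2) = quad_derm s q1 ++ quad_derm s q2.
Proof.
  unfold quad_derm. destruct s as [i j]; simpl.
  assert (Hj : forall q1 q2, Nat.iter j (quad_der DY) (q1 ++ q2) =
                Nat.iter j (quad_der DY) q1 ++ Nat.iter j (quad_der DY) q2).
  { induction j; intros; simpl; auto. rewrite IHj, quad_der_app; auto. }
  rewrite Hj. generalize (Nat.iter j (quad_der DY) q1) (Nat.iter j (quad_der DY) q2).
  induction i; intros; simpl; auto. rewrite IHi, quad_der_app; auto.
Qed.
Lemma iter_nil d n : Nat.iter n (quad_der d) [] = [].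
Proof. induction n; simpl; [auto | rewrite IHn; auto]. Qed.
Lemma quad_derm_nil s : quad_derm s [] = [].
Proof. unfold quad_derm. rewrite (iter_nil DY), (iter_nil DX); auto. Qed.
Lemma quad_eval_app val a b q1 q2 : quad_eval val a b (q1 ++ q2) = quad_eval val a b q1 + quad_eval val a b q2.
Proof. induction q1 as [|[[e s] t] q IH]; simpl; [ring|rewrite IH; ring]. Qed.
Lemma quad_eval_scale val a b c q : quad_eval val a b (quad_scale c q) = eval val c * quad_eval val a b q.
Proof. induction q as [|[[e s] t] q IH]; simpl; [ring|rewrite IH; ring]. Qed.

Definition extV (val : evar -> R) : evar -> R :=
  fun v => match v with VU s => red_sign s * val (VU (red_mi s)) | _ => val v end.
Definition extA (a : mi -> R) : mi -> R := fun s => red_sign s * a (red_mi s).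
Lemma eval_red val e : eval val (red_expr e) = eval (extV val) e.
Proof. induction e; simpl; try congruence. destruct v; simpl; auto. Qed.
Lemma quad_eval_red val a b q :
  quad_eval val a b (red_quad_TE q) = quad_eval (extV val) (extA a) (extA b) q.
Proof.
  induction q as [|[[e s] t] q IH]; simpl; auto.
  rewrite IH, eval_red. unfold extA; ring.
Qed.
Lemma divmod_SS i : (S (S i) / 2 = S (i / 2) /\ S (S i) mod 2 = i mod 2)%nat.
Proof.
  replace (S (S i)) with (i + 1 * 2)%nat by lia. split.
  - rewrite Nat.div_add by lia. lia.
  - rewrite Nat.Div0.mod_add. auto.
Qed.
Lemma red_mi_SS i j : red_mi (S (S i), j) = red_mi (i, S (S j)).
Proof.
  unfold red_mi; simpl fst; simpl snd. destruct (divmod_SS i) as [H1 H2].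
  rewrite H1, H2. f_equal. lia.
Qed.
Lemma red_sign_SS i j : red_sign (S (S i), j) = - red_sign (i, S (S j)).
Proof.
  unfold red_sign; simpl fst. destruct (divmod_SS i) as [H1 _]. rewrite H1.
  rewrite Nat.even_succ, <- Nat.negb_even. destruct (Nat.even (i / 2)); simpl; ring.
Qed.
Lemma sol_extV val : SolV (extV val).
Proof. intros i j; simpl. rewrite red_mi_SS, red_sign_SS; ring. Qed.
Lemma sol_extA a : SolA (extA a).
Proof. intros i j; unfold extA. rewrite red_mi_SS, red_sign_SS; ring. Qed.

Lemma ext_gen (f : mi -> R) : (forall i j, f (S (S i), j) + f (i, S (S j)) = 0) ->
  forall s, red_sign s * f (red_mi s) = f s.
Proof.
  intros H [i j].
  assert (forall i, (forall j, red_sign (i, j) * f (red_mi (i, j)) = f (i, j)) /\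
                    (forall j, red_sign (S i, j) * f (red_mi (S i, j)) = f (S i, j))).
  { clear i j. induction i as [|i [IH1 IH2]]; split; intro j.
    - unfold red_sign, red_mi; simpl. rewrite Nat.add_0_r; ring.
    - unfold red_sign, red_mi; simpl. rewrite Nat.add_0_r; ring.
    - auto.
    - rewrite red_sign_SS, red_mi_SS. rewrite <- Ropp_mult_distr_l, IH1.
      pose proof (H i j); lra. }
  apply H0.
Qed.
Lemma ext_solV val : SolV val -> extV val = val.
Proof.
  intro H; apply functional_extensionality; intros [| |s]; simpl; auto.
  apply (ext_gen (fun s => val (VU s))). intros; apply H.
Qed.
Lemma ext_solA a : SolA a -> extA a = a.
Proof. intro H; apply functional_extensionality; intro s; unfold extA; apply ext_gen; auto. Qed.

Lemma AllEq_red q1 q2 : EqSol q1 q2 -> AllEq (red_quad_TE q1) (red_quad_TE q2).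
Proof.
  intros H val a b; rewrite !quad_eval_red; apply H; auto using sol_extV, sol_extA.
Qed.
Lemma AllEq_zero q1 q2 : AllEq q1 q2 -> quad_zero_TE q1 -> quad_zero_TE q2.
Proof.
  intros H Z val a b. rewrite quad_eval_red, <- H, <- quad_eval_red; apply Z.
Qed.

Definition Qof (N : bidiff) : quad :=
  flat_map (fun '(c, s, t) =>
          quad_scale (ECst (sgn s)) (quad_derm s [(c, (0, 0)%nat, t)])) N.
Lemma Hp_Qof N : Hp N = quad_scale (ECst (- (1 / 2))) (red_quad_TE (Qof N)).
Proof. reflexivity. Qed.

Definition K (N : bidiff) (s0 t0 : mi) (val : evar -> R) : R :=
  fold_right (fun '(c, s, t) acc => (if mi_eqb s s0 && mi_eqb t t0 then eval val c else 0) + acc) 0 N.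
Definition Pq (N : bidiff) (s0 t0 : mi) : quad :=
  flat_map (fun '(c, s, t) => if mi_eqb s s0 && mi_eqb t t0 then [(c, (0, 0)%nat, t0)] else []) N.
Lemma Pq_eval N s0 t0 val a b :
  quad_eval val a b (Pq N s0 t0) = K N s0 t0 val * (a (0, 0)%nat * b t0 - a t0 * b (0, 0)%nat).
Proof.
  induction N as [|[[c s] t] N IH]; simpl; [ring|].
  rewrite quad_eval_app, IH. destruct (mi_eqb s s0 && mi_eqb t t0); simpl; ring.
Qed.

Lemma tderm_lapF i j : tderm (i, j) lapF = EAdd (EVar (VU (S (S i), j))) (EVar (VU (i, S (S j)))).
Proof.
  unfold tderm; simpl fst; simpl snd.
  assert (Nat.iter j (tder DY) lapF = EAdd (EVar (VU (2%nat, j))) (EVar (VU (0%nat, S (S j))))) as ->.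
  { induction j; simpl; auto. rewrite IHj; auto. }
  induction i; simpl; auto. rewrite IHi; auto.
Qed.

Fixpoint wf (i0 j0 m n : nat) {struct m} : R :=
  match m with
  | S (S m') => (if Nat.eqb m' i0 && Nat.eqb n j0 then 1 else 0) - wf i0 j0 m' (S (S n))
  | _ => 0
  end.
Definition wV (s0 : mi) (v : evar) : R :=
  match v with VU (m, n) => wf (fst s0) (snd s0) m n | _ => 0 end.
Lemma wf_eq i0 j0 i j : wf i0 j0 (S (S i)) j + wf i0 j0 i (S (S j)) =
  if Nat.eqb i i0 && Nat.eqb j j0 then 1 else 0.
Proof. simpl. ring. Qed.

Definition ind (t0 : mi) : mi -> R := fun t => if mi_eqb t t0 then 1 else 0.

Lemma nabla_pert N val0 s0 t0 x : SolV val0 ->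
  lin_eval (pertV val0 (wV s0) x) (ind t0) (nabla_Fp N lapF) = x * K N s0 t0 (pertV val0 (wV s0) x).
Proof.
  intro Hs. induction N as [|[[c [i j]] t] N IH]; simpl; [ring|].
  rewrite IH. rewrite tderm_lapF. simpl. unfold pertV at 2 3. simpl.
  destruct s0 as [i0 j0]. simpl fst; simpl snd.
  pose proof (wf_eq i0 j0 i j) as W. pose proof (Hs i j) as S0.
  unfold mi_eqb at 1; simpl fst; simpl snd.
  unfold ind.
  destruct (Nat.eqb i i0 && Nat.eqb j j0); destruct (mi_eqb t t0); simpl;
    [ | | | ]; nra.
Qed.

Lemma K_deriv N s0 t0 val w : exists l, derivable_pt_lim (fun x => K N s0 t0 (pertV val w x)) 0 l.
Proof.
  induction N as [|[[c s] t] N [l IH]]; simpl.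
  - exists 0; apply dpl_const.
  - destruct (mi_eqb s s0 && mi_eqb t t0).
    + eexists; apply dpl_plus; [apply eval_deriv|apply IH].
    + eexists; apply dpl_plus; [apply dpl_const|apply IH].
Qed.

Lemma pertV0 val w : pertV val w 0 = val.
Proof. apply functional_extensionality; intro; unfold pertV; ring. Qed.

Lemma K_eq N1 N2 :
  (forall val a, lin_eval val a (nabla_Fp N1 lapF) = lin_eval val a (nabla_Fp N2 lapF)) ->
  forall val0 s0 t0, SolV val0 -> K N1 s0 t0 val0 = K N2 s0 t0 val0.
Proof.
  intros H val0 s0 t0 Hs.
  destruct (K_deriv N1 s0 t0 val0 (wV s0)) as [l1 D1].
  destruct (K_deriv N2 s0 t0 val0 (wV s0)) as [l2 D2].
  set (g := fun x => K N1 s0 t0 (pertV val0 (wV s0) x) - K N2 s0 t0 (pertV val0 (wV s0) x)).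
  assert (Dg : derivable_pt_lim g 0 (l1 - l2)) by (apply dpl_minus; auto).
  assert (DF : derivable_pt_lim (fun x => x * g x) 0 (1 * g 0 + 0 * (l1 - l2)))
    by (apply dpl_mult; [apply derivable_pt_lim_id|auto]).
  replace (fun x => x * g x) with (fun _ : R => 0) in DF.
  - pose proof (uniqueness_limite _ _ _ _ DF (dpl_const 0 0)) as E.
    unfold g in E. rewrite pertV0 in E. lra.
  - apply functional_extensionality; intro x. unfold g.
    rewrite Rmult_minus_distr_l, <- !nabla_pert by auto. rewrite H; ring.
Qed.

Definition sumL (L : list (mi * mi)) (f : mi * mi -> R) : R := fold_right (fun k acc => f k + acc) 0 L.
Lemma sumL_ext L f g : (forall k, f k = g k) -> sumL L f = sumL L g.
Proof. intros; induction L; simpl; auto. rewrite H, IHL; auto. Qed.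
Lemma sumL_plus L f g : sumL L (fun k => f k + g k) = sumL L f + sumL L g.
Proof. induction L; simpl; [ring|rewrite IHL; ring]. Qed.
Lemma sumL_zero L f : (forall k, In k L -> f k = 0) -> sumL L f = 0.
Proof. induction L; simpl; intros; auto. rewrite H, IHL; auto. ring. Qed.
Lemma sumL_single L f k0 : NoDup L -> In k0 L -> (forall k, k <> k0 -> f k = 0) -> sumL L f = f k0.
Proof.
  induction L as [|k L IH]; simpl; intros ND Hin Hz; [contradiction|].
  inversion ND; subst. destruct Hin as [<-|Hin].
  - rewrite sumL_zero; [ring|]. intros k' Hk'. apply Hz. intro; subst; contradiction.
  - rewrite Hz, IH; auto; [ring|]. intro; subst; contradiction.
Qed.

Lemma mi_eqb_refl s : mi_eqb s s = true.
Proof. unfold mi_eqb; rewrite !Nat.eqb_refl; auto. Qed.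

Lemma Qof_cons c s t N : Qof ((c, s, t) :: N) =
  quad_scale (ECst (sgn s)) (quad_derm s [(c, (0, 0)%nat, t)]) ++ Qof N.
Proof. reflexivity. Qed.
Lemma Pq_cons c s t N s0 t0 : Pq ((c, s, t) :: N) s0 t0 =
  (if mi_eqb s s0 && mi_eqb t t0 then [(c, (0, 0)%nat, t0)] else []) ++ Pq N s0 t0.
Proof. reflexivity. Qed.
Lemma Qof_keys val a b N L : NoDup L -> (forall c s t, In (c, s, t) N -> In (s, t) L) ->
  quad_eval val a b (Qof N) =
  sumL L (fun k => sgn (fst k) * quad_eval val a b (quad_derm (fst k) (Pq N (fst k) (snd k)))).
Proof.
  intros ND. induction N as [|[[c s] t] N IH]; intro Hin.
  - simpl. rewrite sumL_zero; auto. intros; rewrite quad_derm_nil; simpl; ring.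
  - rewrite Qof_cons, quad_eval_app, quad_eval_scale, IH by (intros; apply (Hin c0); right; auto).
    rewrite (sumL_ext L (fun k => sgn (fst k) * quad_eval val a b
         (quad_derm (fst k) (Pq ((c, s, t) :: N) (fst k) (snd k))))
      (fun k => sgn (fst k) * quad_eval val a b (quad_derm (fst k)
         (if mi_eqb s (fst k) && mi_eqb t (snd k) then [(c, (0, 0)%nat, snd k)] else []))
        + sgn (fst k) * quad_eval val a b (quad_derm (fst k) (Pq N (fst k) (snd k)))))
      by (intro k; cbv beta; rewrite Pq_cons, quad_derm_app, quad_eval_app, Rmult_plus_distr_l; reflexivity).
    simpl eval.
    rewrite sumL_plus. f_equal.
    rewrite (sumL_single L _ (s, t)).
    + simpl. rewrite !mi_eqb_refl; simpl; auto.
    + auto.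
    + apply (Hin c); left; auto.
    + intros [s' t'] Hne; simpl.
      destruct (mi_eqb s s' && mi_eqb t t') eqn:E.
      * apply andb_true_iff in E; destruct E as [E1 E2].
        apply mi_eqb_ok in E1; apply mi_eqb_ok in E2; subst; contradiction.
      * rewrite quad_derm_nil; simpl; ring.
Qed.

Definition kdec : forall x y : (mi * mi)%type, {x = y} + {x <> y}.
Proof. repeat decide equality. Defined.
Definition keys (N : bidiff) : list (mi * mi) := map (fun '(c, s, t) => (s, t)) N.
Lemma keys_in N c s t : In (c, s, t) N -> In (s, t) (keys N).
Proof.
  intro H; apply (in_map (fun '(c, s, t) => (s, t))) in H; exact H.
Qed.

Lemma Qof_EqSol N1 N2 :
  (forall val a, lin_eval val a (nabla_Fp N1 lapF) = lin_eval val a (nabla_Fp N2 lapF)) ->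
  EqSol (Qof N1) (Qof N2).
Proof.
  intros H val a b Hv Ha Hb.
  set (L := nodup kdec (keys N1 ++ keys N2)).
  rewrite (Qof_keys val a b N1 L), (Qof_keys val a b N2 L).
  - apply sumL_ext; intro k. f_equal. apply EqSol_derm; auto.
    intros val' a' b' Hv' _ _. rewrite !Pq_eval, (K_eq N1 N2 H); auto.
  - apply NoDup_nodup.
  - intros; apply nodup_In, in_or_app; right; eapply keys_in; eauto.
  - apply NoDup_nodup.
  - intros; apply nodup_In, in_or_app; left; eapply keys_in; eauto.
Qed.

Lemma Hp_AllEq N1 N2 :
  (forall val a, lin_eval val a (nabla_Fp N1 lapF) = lin_eval val a (nabla_Fp N2 lapF)) ->
  AllEq (Hp N1) (Hp N2).
Proof.
  intros H val a b. rewrite !Hp_Qof, !quad_eval_scale. f_equal.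
  apply AllEq_red, Qof_EqSol; auto.
Qed.

Lemma ev_apply_AllEq H N1 N2 G : AllEq (Hp N1) (Hp N2) -> AllEq (ev_apply H N1 G) (ev_apply H N2 G).
Proof.
  intros E val a b. unfold ev_apply. induction (red_lin_TE G) as [|[e s] l IH]; simpl; auto.
  rewrite !quad_eval_app, IH. f_equal. f_equal. rewrite !quad_eval_scale. f_equal.
  apply AllEq_red. apply EqSol_derm. intros ? ? ? _ _ _; apply E.
Qed.

Lemma nabla_ok_eq H N1 N2 : nabla_ok H N1 -> nabla_ok H N2 ->
  forall val a, lin_eval val a (nabla_Fp N1 lapF) = lin_eval val a (nabla_Fp N2 lapF).
Proof. intros H1 H2 val a. rewrite <- H1, <- H2; reflexivity. Qed.

Lemma schouten_AllEq H H' N1 N1' N2 N2' :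
  nabla_ok H N1 -> nabla_ok H N2 -> nabla_ok H' N1' -> nabla_ok H' N2' ->
  AllEq (schouten H H' N1 N1') (schouten H H' N2 N2').
Proof.
  intros A1 A2 B1 B2 val a b. unfold schouten. rewrite !quad_eval_app.
  f_equal; apply ev_apply_AllEq, Hp_AllEq.
  - apply (nabla_ok_eq H); auto.
  - apply (nabla_ok_eq H'); auto.
Qed.

Lemma bracket_zero_of H H' N0 N0' : nabla_ok H N0 -> nabla_ok H' N0' ->
  quad_zero_TE (schouten H H' N0 N0') -> bracket_zero H H'.
Proof.
  intros A B Z. split; [eauto|split; [eauto|]].
  intros N N' HN HN'. apply (AllEq_zero (schouten H H' N0 N0')); auto.
  apply schouten_AllEq; auto.
Qed.
Lemma bracket_nonzero_of H H' N0 N0' : nabla_ok H N0 -> nabla_ok H' N0' ->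
  ~ quad_zero_TE (schouten H H' N0 N0') -> bracket_nonzero H H'.
Proof.
  intros A B Z. split; [eauto|split; [eauto|]].
  intros N N' HN HN' Z'. apply Z. apply (AllEq_zero (schouten H H' N N')); auto.
  apply schouten_AllEq; auto.
Qed.
Definition qN5 : qbidiff := [((qc (-1)), (1,1), (1,0));
  ((qc (-2)), (1,0), (1,1));
  ((qc (1)), (0,2), (0,1));
  ((qc (-1)), (0,1), (2,0));
  ((qc (3)), (0,1), (0,2));
  ((qc (-2)), (0,0), (2,1));
  ((qc (2)), (0,0), (0,3))]%nat.
Definition qN6 : qbidiff := [((qc (1)), (1,1), (0,1));
  ((qc (2)), (1,0), (0,2));
  ((qc (1)), (0,2), (1,0));
  ((qc (4)), (0,1), (1,1));
  ((qc (4)), (0,0), (1,2))]%nat.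
Definition qN7 : qbidiff := [((qc (1)), (1,0), (0,1));
  ((QM (qc (1)) qy), (1,1), (0,1));
  ((QM (qc (2)) qy), (1,0), (0,2));
  ((QM (qc (1)) qx), (1,1), (1,0));
  ((QM (qc (2)) qx), (1,0), (1,1));
  ((qc (3)), (0,1), (1,0));
  ((qc (6)), (0,0), (1,1));
  ((QM (qc (1)) qy), (0,2), (1,0));
  ((QM (qc (4)) qy), (0,1), (1,1));
  ((QM (qc (4)) qy), (0,0), (1,2));
  ((QM (qc (-1)) qx), (0,2), (0,1));
  ((QM (qc (1)) qx), (0,1), (2,0));
  ((QM (qc (-3)) qx), (0,1), (0,2));
  ((QM (qc (2)) qx), (0,0), (2,1));
  ((QM (qc (-2)) qx), (0,0), (0,3))]%nat.
Definition qN8 : qbidiff := [((qc (-1)), (1,0), (1,0));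
  ((QM (qc (-1)) qy), (1,1), (1,0));
  ((QM (qc (-2)) qy), (1,0), (1,1));
  ((QM (qc (1)) qx), (1,1), (0,1));
  ((QM (qc (2)) qx), (1,0), (0,2));
  ((qc (3)), (0,1), (0,1));
  ((qc (-1)), (0,0), (2,0));
  ((qc (5)), (0,0), (0,2));
  ((QM (qc (1)) qy), (0,2), (0,1));
  ((QM (qc (-1)) qy), (0,1), (2,0));
  ((QM (qc (3)) qy), (0,1), (0,2));
  ((QM (qc (-2)) qy), (0,0), (2,1));
  ((QM (qc (2)) qy), (0,0), (0,3));
  ((QM (qc (1)) qx), (0,2), (1,0));
  ((QM (qc (4)) qx), (0,1), (1,1));
  ((QM (qc (4)) qx), (0,0), (1,2))]%nat.
Definition qNs (i : nat) : qbidiff :=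
  match i with 5 => qN5 | 6 => qN6 | 7 => qN7 | 8 => qN8 | _ => [] end%nat.

Ltac cases9 i := do 9 (destruct i as [|i]; [vm_compute; reflexivity|]); lia.

Lemma nabla_all i : (i <= 8)%nat -> nabla_ok (B i) (toN (qNs i)).
Proof.
  intro Hi. unfold nabla_ok.
  apply (lin_eq_check
    (qlin_sub (qop_app (qellF qlapF) (qHu (qB i))) (qop_adj_app (qB i) (qop_app (qellF qlapF) qpvar)))
    (qnabla_Fp (qNs i) qlapF)).
  - apply rep_lin_sub.
    + apply rep_op_app; [apply rep_ellF, rep_lapF|apply rep_Hu, rep_B].
    + apply rep_op_adj_app; [apply rep_B|apply rep_op_app; [apply rep_ellF, rep_lapF|apply rep_pvar]].
  - apply rep_nabla_Fp; [apply rep_toN|apply rep_lapF].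
  - cases9 i.
Qed.

Lemma var_all i : (i <= 8)%nat -> variational_bivector (B i).
Proof.
  intro Hi. split.
  - intros val a. apply (lin_zero_check (qred_lin_TE (qop_app (qellF qlapF) (qHu (qB i))))).
    + apply rep_red_lin_TE, rep_op_app; [apply rep_ellF, rep_lapF| apply rep_Hu, rep_B].
    + cases9 i.
  - apply (lin_eq_check (qred_lin_E (qop_adj_app (qB i) (qop_adj_app (qellF qlapF) qpvar)))
      (qred_lin_E (qop_app (qellF qlapF) (qop_app (qB i) qpvar)))).
    + apply rep_red_lin_E, rep_op_adj_app; [apply rep_B|apply rep_op_adj_app; [apply rep_ellF, rep_lapF|apply rep_pvar]].
    + apply rep_red_lin_E, rep_op_app; [apply rep_ellF, rep_lapF|apply rep_op_app; [apply rep_B|apply rep_pvar]].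
    + cases9 i.
Qed.

Lemma zero_low i : (i <= 4)%nat -> quad_zero_TE (schouten (B i) (B i) (toN (qNs i)) (toN (qNs i))).
Proof.
  intro Hi.
  assert (R : repQ (qschouten (qB i) (qB i) (qNs i) (qNs i)) (schouten (B i) (B i) (toN (qNs i)) (toN (qNs i))))
    by (apply rep_schouten; auto using rep_B, rep_toN).
  replace (qschouten (qB i) (qB i) (qNs i) (qNs i)) with (@nil (qexpr * mi * mi)) in R
    by (do 5 (destruct i as [|i]; [vm_compute; reflexivity|]); lia).
  assert (E : schouten (B i) (B i) (toN (qNs i)) (toN (qNs i)) = []) by (inversion R; auto).
  rewrite E. intros val a b; reflexivity.
Qed.

Definition witV (u : mi) (v : evar) : Q := if evar_eqb v (VU u) then 1%Q else 0%Q.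
Definition witA (s : mi) (x : mi) : Q := if mi_eqb x s then 1%Q else 0%Q.

Lemma nonzero_check hq hq' H H' nq nq' u s t : repL hq H -> repL hq' H' ->
  Qeq_bool (qquad_evalQ (witV u) (witA s) (witA t) (qred_quad_TE (qschouten hq hq' nq nq'))) 0 = false ->
  ~ quad_zero_TE (schouten H H' (toN nq) (toN nq')).
Proof.
  intros R1 R2 Hq Z.
  specialize (Z (fun v => Q2R (witV u v)) (fun x => Q2R (witA s x)) (fun x => Q2R (witA t x))).
  rewrite (rep_quad_eval _ _ _ _ _ (rep_red_quad_TE _ _ (rep_schouten _ _ _ _ _ _ _ _ R1 R2 (rep_toN nq) (rep_toN nq')))) in Z.
  rewrite qquad_evalQ_ok in Z. rewrite <- Q2R0 in Z. apply eqR_Qeq in Z.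
  apply Qeq_bool_iff in Z. congruence.
Qed.

Definition wit (i j : nat) : mi * mi * mi :=
  match i, j with
  | 5, 5 => ((0,3), (0,2), (0,1))
  | 5, 6 => ((0,3), (0,2), (1,0))
  | 5, 7 => ((0,2), (0,2), (1,0))
  | 5, 8 => ((0,2), (1,1), (1,0))
  | 6, 6 => ((0,3), (1,1), (1,0))
  | 6, 7 => ((0,2), (1,1), (1,0))
  | 6, 8 => ((0,2), (0,2), (1,0))
  | 7, 7 => ((0,1), (1,1), (1,0))
  | 7, 8 => ((0,1), (0,2), (1,0))
  | 8, 8 => ((1,0), (0,2), (1,0))
  | _, _ => ((0,0), (0,0), (0,0))
  end%nat.

Lemma pair_check i j : (5 <= i)%nat -> (i <= j)%nat -> (j <= 8)%nat ->
  Qeq_bool (qquad_evalQ (witV (fst (fst (wit i j)))) (witA (snd (fst (wit i j)))) (witA (snd (wit i j)))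
     (qred_quad_TE (qschouten (qB i) (qB j) (qNs i) (qNs j)))) 0 = false.
Proof.
  intros H1 H2 H3.
  do 9 (destruct i as [|i]; [try lia; do 9 (destruct j as [|j]; [try lia; vm_compute; reflexivity|]); lia|]).
  lia.
Qed.

Lemma nonzero_all i j : (5 <= i)%nat -> (i <= j)%nat -> (j <= 8)%nat ->
  ~ quad_zero_TE (schouten (B i) (B j) (toN (qNs i)) (toN (qNs j))).
Proof.
  intros H1 H2 H3. eapply nonzero_check; [apply rep_B|apply rep_B|apply pair_check; auto].
Qed.

Theorem mainTheorem4 :
  (forall i, (i <= 8)%nat -> variational_bivector (B i)) /\
  (forall i, (i <= 4)%nat -> poisson (B i)) /\
  (forall i, (5 <= i <= 8)%nat -> ~ poisson (B i)) /\
  (forall i j, (5 <= i)%nat -> (i <= j)%nat -> (j <= 8)%nat ->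
     bracket_nonzero (B i) (B j)).
Proof.
  split; [exact var_all|split; [|split]].
  - intros i Hi. split; [apply var_all; lia|].
    apply (bracket_zero_of _ _ (toN (qNs i)) (toN (qNs i))); try (apply nabla_all; lia).
    apply zero_low; auto.
  - intros i Hi [_ [_ [_ Hall]]].
    apply (nonzero_all i i); try lia. apply Hall; apply nabla_all; lia.
  - intros i j H1 H2 H3.
    apply (bracket_nonzero_of _ _ (toN (qNs i)) (toN (qNs j))); try (apply nabla_all; lia).
    apply nonzero_all; auto.
Qed.
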